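(* Let $R$ be a topological ring and $M$ a locally compact left topological $R$-module which is of Lie type. Then $M$ has the no small submodules property.
   Context: All topological groups are Hausdorff; rings are unital. $R_R$ denotes $R$ as a right topological module over itself; its Pontryagin dual $\widehat{R_R}$ (continuous homomorphisms $R\to\mathbb{S}^1$, compact-open topology) is a left $R$-module via $(r\chi)(x)=\chi(xr)$. Two topological $R$-modules $M,M'$ are locally isomorphic if there are open neighbourhoods $U\subset M$, $V\subset M'$ of $0$ and a homeomorphism $f:U\to V$ such that $f(x+y)=f(x)+f(y)$ whenever $x,y,x+y\in U$, $f(-x)=-f(x)$ whenever $x,-x\in U$, and $f(rx)=rf(x)$ whenever $x\in U$, $r\in R$, $rx\in U$. $M$ is of Lie type if it is locally isomorphic to $\widehat{R_R}^n$ for some $n\ge 0$. $M$ has the no small submodules property if some neighbourhood of $0$ contains no nonzero submodule. *)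

(* Defs.v *)
From HB Require Import structures.
From mathcomp Require Import all_boot all_order all_algebra.
From mathcomp Require Import all_classical reals topology.
From mathcomp Require Import Rstruct Rstruct_topology.
Set Implicit Arguments. Unset Strict Implicit. Unset Printing Implicit Defensive.
Import Order.TTheory GRing.Theory Num.Theory.
Local Open Scope classical_set_scope.
Local Open Scope ring_scope.

HB.structure Definition TopNmod_join := {M of Topological M & GRing.Nmodule M}.
HB.structure Definition TopZmod_join := {M of Topological M & GRing.Zmodule M}.

HB.mixin Record Top_isTopRing R & Topological R & GRing.PzRing R := {
  ring_add_continuous : continuous (fun x : R * R => x.1 + x.2) ;
  ring_opp_continuous : continuous (fun x : R => - x) ;
  mul_continuous : continuous (fun x : R * R => x.1 * x.2) }.

#[short(type="topRingType")]
HB.structure Definition TopRing :=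
  {R of Topological R & GRing.PzRing R & Top_isTopRing R}.

HB.mixin Record Top_isTopLmod (R : topRingType) M
    & Topological M & GRing.Lmodule R M := {
  mod_add_continuous : continuous (fun x : M * M => x.1 + x.2) ;
  mod_opp_continuous : continuous (fun x : M => - x) ;
  scale_continuous : continuous (fun x : R * M => x.1 *: x.2) }.

#[short(type="topLmodType")]
HB.structure Definition TopLmod (R : topRingType) :=
  {M of Topological M & GRing.Lmodule R M & Top_isTopLmod R M}.

(** The circle group S^1, realised as the unit circle in R^2 = C
    (with the usual product topology), with complex multiplication. *)
Definition C2 : Type := (Rdefinitions.R * Rdefinitions.R)%type.
Definition on_circle (z : C2) : Prop := z.1 ^+ 2 + z.2 ^+ 2 = 1.
Definition cmul (z w : C2) : C2 := (z.1 * w.1 - z.2 * w.2, z.1 * w.2 + z.2 * w.1).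
Definition cconj (z : C2) : C2 := (z.1, - z.2).
Definition cone : C2 := (1, 0).

Definition is_character (R : topRingType) (chi : R -> C2) : Prop :=
  [/\ continuous chi, (forall x, on_circle (chi x))
    & (forall x y, chi (x + y) = cmul (chi x) (chi y))].

Definition dualpow (R : topRingType) (n : nat) : topologicalType :=
  {ptws 'I_n -> {compact-open, R -> C2}}.

(** The underlying set of (widehat{R_R})^n (with subspace topology). *)
Definition dual_set (R : topRingType) (n : nat) : set (dualpow R n) :=
  [set X | forall i, is_character (X i : R -> C2)].

Definition dzero (R : topRingType) (n : nat) : dualpow R n := fun _ _ => cone.
Definition dadd (R : topRingType) (n : nat) (X Y : dualpow R n) : dualpow R n :=
  fun i x => cmul ((X i : R -> C2) x) ((Y i : R -> C2) x).
Definition dopp (R : topRingType) (n : nat) (X : dualpow R n) : dualpow R n :=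
  fun i x => cconj ((X i : R -> C2) x).
Definition dscale (R : topRingType) (n : nat) (r : R) (X : dualpow R n) : dualpow R n :=
  fun i x => (X i : R -> C2) (x * r).

Definition locally_iso_dualpow (R : topRingType) (M : topLmodType R) (n : nat) : Prop :=
  exists (U : set M) (V : set (dualpow R n)) (f : M -> dualpow R n)
         (g : dualpow R n -> M),
  [/\
      (open U /\ U 0),
      ((exists W : set (dualpow R n), open W /\ V = W `&` @dual_set R n) /\ V (@dzero R n)),
      [/\ (forall x, U x -> V (f x)), (forall y, V y -> U (g y)),
          (forall x, U x -> g (f x) = x), (forall y, V y -> f (g y) = y)
        & ({within U, continuous f} /\ {within V, continuous g})],
      ((forall x y, U x -> U y -> U (x + y) -> f (x + y) = dadd (f x) (f y)) /\
       (forall x, U x -> U (- x) -> f (- x) = dopp (f x)))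
    &
      (forall (r : R) x, U x -> U (r *: x) -> f (r *: x) = dscale r (f x))].

Definition lie_type (R : topRingType) (M : topLmodType R) : Prop :=
  exists n : nat, locally_iso_dualpow M n.

Definition is_submodule (R : topRingType) (M : topLmodType R) (S : set M) : Prop :=
  [/\ S 0, (forall x y, S x -> S y -> S (x + y))
    & (forall (r : R) x, S x -> S (r *: x))].

Definition no_small_submodules (R : topRingType) (M : topLmodType R) : Prop :=
  exists N : set M, nbhs (0 : M) N /\
    forall S : set M, is_submodule S -> S `<=` N -> S = [set 0].

(* Main.v *)
Require Import Defs.
From HB Require Import structures.
From mathcomp Require Import all_boot all_order all_algebra.
From mathcomp Require Import all_classical reals topology.
From mathcomp Require Import normedtype Rstruct Rstruct_topology.
From mathcomp Require Import ring lra zify.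
Import Order.TTheory GRing.Theory Num.Theory.
Local Open Scope classical_set_scope.
Local Open Scope ring_scope.

Lemma char0 (R : topRingType) (chi : R -> C2) : is_character chi -> chi 0 = cone.
Proof.
case=> _ circ add.
have := add 0 0; rewrite addr0.
have := circ 0; rewrite /on_circle /cmul /cone.
case: (chi 0) => a b /= h [ha hb].
have hb0 : b = 0.
  have : b * (1 - 2 * a) = 0.
    have e : b * (1 - 2 * a) = b - (a * b + b * a) by ring.
    by rewrite e -hb subrr.
  move/eqP; rewrite mulf_eq0 => /orP[/eqP //|/eqP h2].
  nra.
have : a = 1 by subst b; nra.
by move=> ->; rewrite hb0.
Qed.

Lemma char_triv (R : topRingType) (chi : R -> C2) : is_character chi ->
  (forall r, 0 < (chi r).1) -> forall r, chi r = cone.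
Proof.
case=> _ circ add pos r.
set d := 1 - (chi r).1.
have le1 : forall s, (chi s).1 <= 1.
  move=> s; have := circ s; rewrite /on_circle.
  case: (chi s) => a b /= h.
  have e : (a - 1) ^+ 2 = a ^+ 2 - 2 * a + 1 by ring.
  have := sqr_ge0 (a - 1); have := sqr_ge0 b; rewrite e; lra.
have key : forall k, (2 ^+ k) * d <= 1 - (chi (r *+ (2 ^ k))).1.
  elim=> [|k IH]; first by rewrite expr0 mul1r expn0 mulr1n.
  rewrite expnS mul2n -addnn mulrnDr add /cmul /=.
  have := circ (r *+ 2 ^ k); have := pos (r *+ 2 ^ k); have := le1 (r *+ 2 ^ k).
  rewrite /on_circle !expr2 exprS -mulrA.
  move: IH; set t := 2 ^+ k * d; case: (chi (r *+ 2 ^ k)) => a b /= IH h1 h2 h3.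
  have : 1 - a <= (1 - a) * (1 + a).
    have : 0 <= (1 - a) * a by apply: mulr_ge0; lra.
    have e : (1 - a) * (1 + a) = (1 - a) + (1 - a) * a by ring.
    rewrite e; lra.
  lra.
have d0 : 0 <= d by rewrite /d; have := le1 r; lra.
have dz : d = 0.
  apply/eqP; rewrite eq_le d0 andbT; apply/negP => /negP; rewrite -ltNge => dp.
  have dip : 0 < d^-1 by rewrite invr_gt0.
  have [m hb] : exists m : nat, d^-1 < m%:R.
    by exists (Num.Def.archi_bound d^-1); exact: archi_boundP (ltW dip).
  have := key m; have := pos (r *+ 2 ^ m).
  have : forall j : nat, (j%:R : Rdefinitions.R) <= 2 ^+ j.
    by move=> j; rewrite -natrX ler_nat; elim: j => // j IH; rewrite expnS; lia.
  move/(_ m).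
  have h1 : 1 < m%:R * d.
    have : d^-1 * d < m%:R * d by rewrite ltr_pM2r.
    by rewrite mulVf // gt_eqF.
  move=> hm; have : m%:R * d <= 2 ^+ m * d by rewrite ler_wpM2r // ltW.
  lra.
have := circ r; rewrite /on_circle /cone.
move: dz; rewrite /d; case: (chi r) => a b /= h1 h2.
have a1 : a = 1 by lra.
have : b ^+ 2 = 0 by subst a; lra.
by move/eqP; rewrite expf_eq0 /= => /eqP ->; rewrite a1.
Qed.

Lemma open_pos1 : open [set z : C2 | 0 < z.1].
Proof.
have cf : continuous (@fst Rdefinitions.R Rdefinitions.R).
  by move=> p; apply: cvg_fst.
by have := (proj1 (continuousP _) cf) _ (@open_gt _ 0).
Qed.

Theorem mainTheorem18 (R : topRingType) (M : topLmodType R) :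
  hausdorff_space R -> hausdorff_space M ->
  locally_compact [set: M] -> lie_type M -> no_small_submodules M.
Proof.
move=> _ _ _ [n [U [V [f [g [[oU U0] [[W [oW VE]] V0] [fUV gVU gf fg [fc gc]] [fadd fopp] fsc]]]]]].
have Vch : forall y, V y -> forall i, is_character (y i : R -> C2).
  by move=> y; rewrite VE => -[_ ?].
have f0 : f 0 = @dzero R n.
  have U00 : U ((0 : R) *: (0 : M)) by rewrite scale0r.
  have := fsc 0 0 U0 U00; rewrite scale0r => e.
  apply/funext => i; apply/funext => y.
  have := congr1 (fun X : dualpow R n => (X i : R -> C2) y) e.
  rewrite /dscale /= mulr0 => ->.
  exact: (@char0 _ _ (Vch _ (fUV _ U0) i)).
pose P := [set X : dualpow R n | forall i, 0 < ((X i : R -> C2) 1).1].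
have nP : nbhs (@dzero R n) P.
  have := @filter_forall (dualpow R n) 'I_n (fun i (X : dualpow R n) => 0 < ((X i : R -> C2) 1).1) (nbhs (@dzero R n)) _.
  apply => i.
  pose Q := [set h : {compact-open, R -> C2} | h @` [set 1] `<=` [set z : C2 | 0 < z.1]].
  have nQ : nbhs ((@dzero R n) i) Q.
    apply: open_nbhs_nbhs; split.
      exact: compact_open_open (@compact_set1 _ _) open_pos1.
    by move=> _ [x -> <-]; rewrite /dzero /cone /=; lra.
  have := @proj_continuous _ _ i (@dzero R n) Q nQ.
  move=> h; have h' : nbhs (@dzero R n) ((proj i) @^-1` Q) := h.
  apply: filterS h' => X QX; apply: QX; by exists 1.
exists (U `&` f @^-1` P); split.
  apply: filterI; first exact: open_nbhs_nbhs.
  have := (continuous_open_subspace f oU); move=> e; rewrite e in fc.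
  have := fc 0 (mem_set U0) P; rewrite /= f0; apply; exact: nP.
move=> S [S0 Sadd Ssc] SN.
apply/seteqP; split; last by move=> _ ->.
move=> x Sx.
have Ux : U x := (SN x Sx).1.
have fx : f x = @dzero R n.
  apply/funext => i; apply/funext => y.
  have hp : forall r, 0 < ((f x i : R -> C2) r).1.
    move=> r; have [Urx Prx] := SN _ (Ssc r x Sx).
    by have := Prx i; rewrite fsc // /dscale mul1r.
  exact: (@char_triv _ _ (Vch _ (fUV _ Ux) i) hp).
by rewrite /= -(gf _ Ux) fx -f0 gf.
Qed.
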